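(* Let $d\ge2$ and $\gamma^\mu\in\mathbb{S}^d$ with zero diagonal and $\gamma^\mu_{ij}>0$ for all $i\ne j$, and set $\gamma^\ast=\min_{i\ne j}\gamma^\mu_{ij}$. For $\mu\in\Delta^d$ let $\widetilde{c}^\mu$ be as defined in the context and let $\widetilde{a}^\mu$ be the same matrix with $\gamma^\mu_{ij}$ replaced by $1$ for all $i\ne j$. Then $\widetilde{c}^\mu-\gamma^\ast\widetilde{a}^\mu$ is positive semidefinite, and $\mathrm{rk}(\widetilde{c}^\mu)=\mathrm{rk}(\widetilde{a}^\mu)$.
   Context: $\Delta^d$ is the unit simplex. For $\mu\in\Delta^d$ and $\gamma\in\mathbb{S}^d$ with zero diagonal, $c\in\mathbb{S}^d$ is given by $c_{ii}=\sum_{j\ne i}\gamma_{ij}\mu^i\mu^j$, $c_{ij}=-\gamma_{ij}\mu^i\mu^j$ ($i\ne j$); $\widetilde{c}^\mu$ denotes this matrix for $\gamma=\gamma^\mu$ with the $d$-th row and column deleted. *)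

(* Defs.v *)
From mathcomp Require Import all_boot all_order all_algebra.
Set Implicit Arguments. Unset Strict Implicit. Unset Printing Implicit Defensive.
Import Order.TTheory GRing.Theory Num.Theory.
Local Open Scope ring_scope.

Definition in_simplex (R : realFieldType) (d : nat) (mu : 'I_d -> R) : Prop :=
  (forall i, 0 <= mu i) /\ \sum_(i < d) mu i = 1.

Definition cmat (R : realFieldType) (d : nat) (gamma : 'M[R]_d) (mu : 'I_d -> R)
  : 'M[R]_d :=
  \matrix_(i, j) (if i == j then \sum_(k < d | k != i) gamma i k * mu i * mu k
                  else - (gamma i j * mu i * mu j)).

(* c with the d-th (last) row and column deleted: indices 0..d-2 kept. *)
Definition ctilde (R : realFieldType) (d : nat) (gamma : 'M[R]_d) (mu : 'I_d -> R)
  : 'M[R]_(d.-1) :=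
  \matrix_(i, j) cmat gamma mu (widen_ord (leq_pred d) i) (widen_ord (leq_pred d) j).

Definition ones_offdiag (R : realFieldType) (d : nat) : 'M[R]_d :=
  \matrix_(i, j) (if i == j then 0 else 1).

Definition atilde (R : realFieldType) (d : nat) (mu : 'I_d -> R) : 'M[R]_(d.-1) :=
  ctilde (ones_offdiag R d) mu.

Definition psd (R : realFieldType) (n : nat) (M : 'M[R]_n) : Prop :=
  forall x : 'cV[R]_n, 0 <= (x^T *m M *m x) 0 0.

Definition min_offdiag (R : realFieldType) (d : nat) (gamma : 'M[R]_d) (g : R) : Prop :=
  (exists i j, i != j /\ gamma i j = g) /\ (forall i j, i != j -> g <= gamma i j).

(* Main.v *)
Require Import Defs.
From mathcomp Require Import all_boot all_order all_algebra.
From mathcomp Require Import zify ring lra.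
Import Order.TTheory GRing.Theory Num.Theory.
Local Open Scope ring_scope.

Section S.
Variables (R : realFieldType) (n : nat).
Implicit Types (gamma : 'M[R]_n.+1) (mu : 'I_n.+1 -> R).

Definition ext (u : 'rV[R]_n) (k : 'I_n.+1) : R :=
  if unlift ord_max k is Some j then u 0 j else 0.

Definition w (j : 'I_(n.+1.-1)) : 'I_n.+1 := widen_ord (leq_pred n.+1) j.

Lemma ext_w u j : ext u (w j) = u 0 j.
Proof.
have -> : w j = lift ord_max j by apply: val_inj; rewrite /= /bump leqNgt ltn_ord.
by rewrite /ext liftK.
Qed.

Lemma ext_max u : ext u ord_max = 0.
Proof. by rewrite /ext unlift_none. Qed.

Lemma full_row gamma mu (z : 'I_n.+1 -> R) j :
  gamma^T = gamma -> (forall i, gamma i i = 0) ->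
  \sum_k z k * cmat gamma mu k j =
  \sum_i gamma i j * mu i * mu j * (z j - z i).
Proof.
move=> gs gd.
rewrite (bigD1 j) //= [RHS](bigD1 j) //= subrr mulr0 add0r /cmat mxE eqxx.
rewrite mulr_sumr -big_split; apply: eq_bigr => i /negbTE ij.
rewrite mxE ij.
have -> : gamma j i = gamma i j by rewrite -[in LHS]gs mxE.
rewrite /=; ring.
Qed.

Lemma row_form gamma mu (u : 'rV[R]_n) j :
  gamma^T = gamma -> (forall i, gamma i i = 0) ->
  (u *m ctilde gamma mu) 0 j =
  \sum_i gamma i (w j) * mu i * mu (w j) * (ext u (w j) - ext u i).
Proof.
move=> gs gd; rewrite -full_row // mxE big_ord_recr /= ext_max mul0r addr0.
apply: eq_bigr => k _; rewrite mxE.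
have -> : widen_ord (leqnSn n) k = w k by apply: val_inj.
by rewrite ext_w.
Qed.

Lemma sym2 (a : 'I_n.+1 -> 'I_n.+1 -> R) (y : 'I_n.+1 -> R) :
  (forall i j, a i j = a j i) ->
  (\sum_j \sum_i a i j * (y j - y i) * y j) *+ 2 =
  \sum_j \sum_i a i j * (y j - y i) ^+ 2.
Proof.
move=> as_.
have E : \sum_j \sum_i a i j * (y j - y i) ^+ 2 =
  \sum_j \sum_i a i j * (y j - y i) * y j - \sum_j \sum_i a i j * (y j - y i) * y i.
  rewrite -sumrB; apply: eq_bigr => j _; rewrite -sumrB; apply: eq_bigr => i _; ring.
have F : \sum_j \sum_i a i j * (y j - y i) * y i =
  - \sum_j \sum_i a i j * (y j - y i) * y j.
  rewrite exchange_big /= -sumrN; apply: eq_bigr => j _; rewrite -sumrN.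
  apply: eq_bigr => i _; rewrite as_; ring.
by rewrite E F opprK mulr2n.
Qed.

Lemma quad gamma mu (x : 'cV[R]_n) :
  gamma^T = gamma -> (forall i, gamma i i = 0) ->
  (x^T *m ctilde gamma mu *m x) 0 0 *+ 2 =
  \sum_j \sum_i gamma i j * mu i * mu j * (ext x^T j - ext x^T i) ^+ 2.
Proof.
move=> gs gd.
rewrite -(sym2 (fun i j => gamma i j * mu i * mu j)); last first.
  by move=> i j; rewrite -[in LHS]gs mxE; ring.
congr (_ *+ 2).
rewrite mxE big_ord_recr /= ext_max.
rewrite [X in _ + X]big1 ?addr0; last by move=> i _; rewrite mulr0.
apply: eq_bigr => k _.
have -> : widen_ord (leqnSn n) k = w k by apply: val_inj.
rewrite row_form // mulr_suml !ext_w mxE; apply: eq_bigr => i _; done.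
Qed.
End S.
Arguments ext {R n}.
Arguments w {n}.
Arguments quad {R n}.
Arguments row_form {R n}.

Lemma kerP (R : realFieldType) n (gamma : 'M[R]_n.+1) mu (u : 'rV[R]_n) :
  gamma^T = gamma -> (forall i, gamma i i = 0) ->
  (forall i j, i != j -> 0 < gamma i j) -> (forall i, 0 <= mu i) ->
  (u *m ctilde gamma mu == 0) =
  [forall i, forall j, mu i * mu j * (ext u j - ext u i) == 0].
Proof.
move=> gs gd gp mp.
have g0 : forall i j, 0 <= gamma i j.
  by move=> i j; case: (eqVneq i j) => [->|/gp/ltW //]; rewrite gd.
apply/eqP/forallP => [H i|H].
- apply/forallP => j; apply/eqP.
  have Q := quad gamma mu u^T gs gd.
  rewrite trmxK H mul0mx mxE in Q.
  have {}Q : 0 = \sum_j \sum_i gamma i j * mu i * mu j * (ext u j - ext u i) ^+ 2 by rewrite -Q mul0rn.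
  have t : forall i j, 0 <= gamma i j * mu i * mu j * (ext u j - ext u i)^+2.
    by move=> k l; rewrite mulr_ge0 ?sqr_ge0 // !mulr_ge0.
  have Hj : \sum_i gamma i j * mu i * mu j * (ext u j - ext u i) ^+ 2 = 0.
    apply: (psumr_eq0P _ (esym Q)) => //= k _.
    by apply: sumr_ge0 => l _; apply: t.
  have := psumr_eq0P _ Hj (i:=i) isT.
  case: (eqVneq i j) => [->|ij]; first by move=> _; ring.
  move=> /(_ (fun l _ => t l j)) h.
  have : (mu i * mu j * (ext u j - ext u i)) * (ext u j - ext u i) = 0.
    apply: (mulfI (lt0r_neq0 (gp _ _ ij))).
    transitivity (gamma i j * mu i * mu j * (ext u j - ext u i) ^+ 2); first ring.
    rewrite h; ring.
  move/eqP; rewrite mulf_eq0 => /orP[/eqP //| /eqP e]; rewrite e; ring.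
- apply/matrixP => a j; rewrite (ord1 a) row_form // [RHS]mxE.
  apply: big1 => i _; move/forallP: (H i) => /(_ (w j)) /eqP.
  by rewrite -!mulrA => ->; rewrite mulr0.
Qed.

Lemma rank_eq (F : fieldType) m (A B : 'M[F]_m) :
  (forall u : 'rV_m, (u *m A == 0) = (u *m B == 0)) -> \rank A = \rank B.
Proof.
move=> H.
have S : forall A B : 'M[F]_m, (forall u : 'rV_m, (u *m A == 0) = (u *m B == 0)) ->
   (kermx A <= kermx B)%MS.
  move=> A' B' H'; apply/row_subP => i; rewrite sub_kermx -H' -sub_kermx; exact: row_sub.
have e : \rank (kermx A) = \rank (kermx B).
  by apply/eqP; rewrite eqn_leq !mxrankS // ; apply: S => u; rewrite H.
rewrite !mxrank_ker in e.
have := rank_leq_row A; have := rank_leq_row B. lia.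
Qed.

Theorem mainTheorem17 (R : realFieldType) (d : nat) (hd : (2 <= d)%N)
  (gamma : 'M[R]_d) (gsym : gamma^T = gamma)
  (gdiag : forall i, gamma i i = 0)
  (gpos : forall i j, i != j -> 0 < gamma i j)
  (gstar : R) (hgstar : min_offdiag gamma gstar)
  (mu : 'I_d -> R) (hmu : in_simplex mu) :
  psd (ctilde gamma mu - gstar *: atilde mu) /\
  \rank (ctilde gamma mu) = \rank (atilde mu).
Proof.
case: d hd gamma gsym gdiag gpos hgstar mu hmu => [//|n] _ gamma gs gd gp [_ gmin] mu [mp _].
have os : (ones_offdiag R n.+1)^T = ones_offdiag R n.+1.
  by apply/matrixP => i j; rewrite !mxE eq_sym.
have od : forall i, ones_offdiag R n.+1 i i = 0 by move=> i; rewrite mxE eqxx.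
have op : forall i j, i != j -> 0 < ones_offdiag R n.+1 i j.
  by move=> i j /negbTE ij; rewrite mxE ij.
split.
- move=> x.
  have E : forall (M N : 'M[R]_1), (M - gstar *: N) 0 0 = M 0 0 - gstar * N 0 0 by move=> M N; rewrite !mxE.
  rewrite mulmxBr mulmxBl -scalemxAr -scalemxAl E.
  set QC := (x^T *m _ *m x) 0 0.
  set QA := (x^T *m _ *m x) 0 0.
  have qc := quad gamma mu x gs gd.
  have qa := quad (ones_offdiag R n.+1) mu x os od.
  rewrite -/QC in qc; rewrite /atilde -/QA in qa.
  suff : 0 <= (QC - gstar * QA) *+ 2 by rewrite mulr2n; lra.
  rewrite mulrnBl -mulrnAr qc qa mulr_sumr -sumrB; apply: sumr_ge0 => j _.
  rewrite mulr_sumr -sumrB; apply: sumr_ge0 => i _.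
  have -> : gamma i j * mu i * mu j * (ext x^T j - ext x^T i) ^+ 2 -
    gstar * (ones_offdiag R n.+1 i j * mu i * mu j * (ext x^T j - ext x^T i) ^+ 2)
    = (gamma i j - gstar * ones_offdiag R n.+1 i j) * (mu i * mu j) * (ext x^T j - ext x^T i) ^+ 2.
    ring.
  rewrite mulr_ge0 ?sqr_ge0 // mulr_ge0 ?mulr_ge0 //.
  rewrite mxE; case: (eqVneq i j) => [->|ij]; first by rewrite gd mulr0 subrr.
  by rewrite mulr1 subr_ge0 gmin.
- apply: rank_eq => u; rewrite /atilde !kerP //.
Qed.
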